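(* Let $f:\mathbb{R}^d\to\mathbb{R}$ be differentiable with $f^*:=\sup_{\theta} f(\theta)<\infty$. Assume (i) $f$ is $L$-smooth; (ii) $f$ satisfies the non-uniform Łojasiewicz condition with degree $\xi=0$, i.e. there is a function $C:\mathbb{R}^d\to(0,\infty)$ with $\|\nabla f(\theta)\|_2\ge C(\theta)\,|f^*-f(\theta)|$ for all $\theta$. Fix $h\in(0,1)$ and $\eta_{\max}>0$, and run $\theta_{t+1}=\theta_t+\eta_t\nabla f(\theta_t)$ for $t=1,2,\dots$, where $\eta_t$ is chosen by backtracking Armijo line-search, i.e. $\eta_t$ is the largest step-size in $(0,\eta_{\max}]$ satisfying $$f(\theta_t+\eta_t\nabla f(\theta_t))\ge f(\theta_t)+h\,\eta_t\,\|\nabla f(\theta_t)\|_2^2 .$$ Assume (iii) $\mu:=\inf_{t\ge 1}[C(\theta_t)]^2>0$. Then for every $T\ge 1$, $$f^*-f(\theta_{T+1})\le \max\Big\{\frac{L}{2h(1-h)},\ \frac{1}{h\,\eta_{\max}}\Big\}\frac{1}{\mu\, T}.$$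
   Context: $f$ is $L$-smooth means $|f(\theta)-f(\theta')-\langle\nabla f(\theta'),\theta-\theta'\rangle|\le \frac{L}{2}\|\theta-\theta'\|_2^2$ for all $\theta,\theta'$. (In the paper $f$ is the policy-gradient objective of a softmax policy, e.g. $f(\theta)=\langle\pi_\theta,r\rangle$ for bandits or $f(\theta)=V^{\pi_\theta}(\rho)$ for tabular MDPs, but the result is stated for an abstract $f$ with these properties.) *)

(* Defs.v *)
From HB Require Import structures.
From mathcomp Require Import all_boot all_order all_algebra.
From mathcomp Require Import all_classical all_reals all_analysis.
Set Implicit Arguments. Unset Strict Implicit. Unset Printing Implicit Defensive.
Import Order.TTheory GRing.Theory Num.Theory.
Import numFieldNormedType.Exports.
Local Open Scope ring_scope.

Definition dotv {R : realType} {d : nat} (u v : 'rV[R]_d) : R :=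
  \sum_(i < d) u ord0 i * v ord0 i.

Definition norm2 {R : realType} {d : nat} (v : 'rV[R]_d) : R :=
  Num.sqrt (dotv v v).

Definition is_gradient {R : realType} {d : nat}
  (f : 'rV[R]_d -> R) (g : 'rV[R]_d -> 'rV[R]_d) : Prop :=
  forall θ, differentiable f θ /\ forall v, 'd f θ v = dotv (g θ) v.

Definition L_smooth {R : realType} {d : nat}
  (f : 'rV[R]_d -> R) (g : 'rV[R]_d -> 'rV[R]_d) (L : R) : Prop :=
  forall θ θ', `|f θ - f θ' - dotv (g θ') (θ - θ')| <= L / 2 * norm2 (θ - θ') ^+ 2.

Definition is_sup_of {R : realType} {d : nat} (f : 'rV[R]_d -> R) (fstar : R) : Prop :=
  (forall θ, f θ <= fstar) /\ (forall e, 0 < e -> exists θ, fstar - e < f θ).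

Definition armijo {R : realType} {d : nat}
  (f : 'rV[R]_d -> R) (g : 'rV[R]_d -> 'rV[R]_d) (h : R) (θ : 'rV[R]_d) (η : R) : Prop :=
  f (θ + η *: g θ) >= f θ + h * η * norm2 (g θ) ^+ 2.

(* Main.v *)
Require Import Defs.
From HB Require Import structures.
From mathcomp Require Import all_boot all_order all_algebra.
From mathcomp Require Import all_classical all_reals all_analysis.
From mathcomp Require Import ring lra.
Import Order.TTheory GRing.Theory Num.Theory.
Import numFieldNormedType.Exports.
Local Open Scope ring_scope.

Lemma step_ineq (R : realType) (x y T : R) : 0 <= y -> 0 <= x ->
  y <= x - x ^+ 2 -> x * T <= 1 -> 0 <= T -> y * (T + 1) <= 1.
Proof.
move=> hb ha hba haT hT.
have h1 : y * (T + 1) <= (x - x^+2) * (T+1) by apply: ler_wpM2r; lra.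
apply: le_trans h1 _.
case: (leP (x * (T+1)) 1) => hxT.
  nra.
nra.
Qed.
Lemma dotv_ge0 (R : realType) d (v : 'rV[R]_d) : 0 <= dotv v v.
Proof. by apply: sumr_ge0 => i _; rewrite -expr2 sqr_ge0. Qed.

Lemma norm2_sq (R : realType) d (v : 'rV[R]_d) : norm2 v ^+ 2 = dotv v v.
Proof. by rewrite /norm2 sqr_sqrtr // dotv_ge0. Qed.

Lemma dotvZ (R : realType) d (u v : 'rV[R]_d) (a : R) : dotv u (a *: v) = a * dotv u v.
Proof.
rewrite /dotv mulr_sumr; apply: eq_bigr => i _; rewrite mxE; lra.
Qed.

Lemma dotvZl (R : realType) d (u v : 'rV[R]_d) (a : R) : dotv (a *: u) v = a * dotv u v.
Proof.
rewrite /dotv mulr_sumr; apply: eq_bigr => i _; rewrite mxE; lra.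
Qed.

Lemma armijo_small (R : realType) d (f : 'rV[R]_d -> R) g L h th (e : R) :
  L_smooth f g L -> 0 <= e -> L * e <= 2 * (1 - h) -> armijo f g h th e.
Proof.
move=> Hs he hL; rewrite /armijo.
have := Hs (th + e *: g th) th.
have -> : th + e *: g th - th = e *: g th by rewrite addrC addKr.
rewrite norm2_sq dotvZ dotvZl dotvZ -norm2_sq.
set N := norm2 (g th) ^+ 2.
have hN : 0 <= N by rewrite /N sqr_ge0.
move/ler_normlP => [H1 H2].
have : 0 <= e * N * (2 * (1 - h) - L * e) by apply: mulr_ge0; [apply: mulr_ge0|lra].
nra.
Qed.

Theorem theorem1 (R : realType) (d : nat)
  (f : 'rV[R]_d -> R) (g : 'rV[R]_d -> 'rV[R]_d) (fstar L : R)
  (C : 'rV[R]_d -> R) (h eta_max mu : R)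
  (theta : nat -> 'rV[R]_d) (eta : nat -> R) :
  is_gradient f g ->
  is_sup_of f fstar ->
  L_smooth f g L ->
  (forall θ, 0 < C θ) ->
  (forall θ, norm2 (g θ) >= C θ * `|fstar - f θ|) ->
  0 < h -> h < 1 -> 0 < eta_max ->
  (forall t, (1 <= t)%N ->
     [/\ 0 < eta t, eta t <= eta_max, armijo f g h (theta t) (eta t)
       & forall η, 0 < η -> η <= eta_max -> armijo f g h (theta t) η -> η <= eta t]) ->
  (forall t, (1 <= t)%N -> theta t.+1 = theta t + eta t *: g (theta t)) ->
  (forall t, (1 <= t)%N -> mu <= C (theta t) ^+ 2) ->
  (forall e, 0 < e -> exists2 t, (1 <= t)%N & C (theta t) ^+ 2 < mu + e) ->
  0 < mu ->
  forall T : nat, (1 <= T)%N ->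
    fstar - f (theta T.+1)
      <= Num.max (L / (2 * h * (1 - h))) (1 / (h * eta_max)) * (1 / (mu * T%:R)).
Proof.
move=> _ [Hsup _] Hs HC HL hh0 hh1 he0 Heta Hth Hmu _ hmu0.
set m1 := L / (2 * h * (1 - h)).
set m2 := 1 / (h * eta_max).
set M := Num.max m1 m2.
have Hm1 : m1 * (2 * h * (1 - h)) = L by rewrite /m1; field; lra.
have Hm2 : m2 * (h * eta_max) = 1 by rewrite /m2; field; lra.
have hM1 : m1 <= M by rewrite le_max lexx.
have hM2 : m2 <= M by rewrite le_max lexx orbT.
have hm2 : 0 < m2 by rewrite /m2 divr_gt0 // mulr_gt0.
have hM : 0 < M by lra.
set emin := 1 / (h * M).
have Hemin : emin * (h * M) = 1 by rewrite /emin; field; lra.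
have hemin : 0 < emin by rewrite /emin divr_gt0 // mulr_gt0.
have hemax : emin <= eta_max.
  have : emin * (h * M) <= eta_max * (h * M).
    rewrite Hemin.
    have : 0 <= eta_max * h by rewrite mulr_ge0 ?ltW.
    move/ler_wpM2l => /(_ _ _ hM2).
    have E1 : eta_max * h * m2 = 1 by rewrite -Hm2; ring.
    have E2 : eta_max * (h * M) = eta_max * h * M by ring.
    lra.
  move=> H; rewrite -(ler_pM2r (_ : 0 < h * M)) //; exact: mulr_gt0.
have hLe : L * emin <= 2 * (1 - h).
  have hk : 0 <= 2 * h * (1 - h) by apply: mulr_ge0; lra.
  have := ler_wpM2l hk hM1.
  have E1 : 2 * h * (1 - h) * m1 = L by rewrite -Hm1; ring.
  move=> H.
  have hhM : 0 < h * M by exact: mulr_gt0.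
  rewrite -(ler_pM2r hhM).
  have E2 : L * emin * (h * M) = L by rewrite -mulrA Hemin mulr1.
  rewrite E2.
  have E3 : 2 * (1 - h) * (h * M) = 2 * h * (1 - h) * M by ring.
  lra.
set del := fun t => fstar - f (theta t).
have hdel : forall t, 0 <= del t by move=> t; rewrite /del subr_ge0.
set c := mu / M.
have Hc : c * M = mu by rewrite /c; field; lra.
have hc : 0 < c by rewrite /c divr_gt0.
have Hstep : forall t, (1 <= t)%N -> del t.+1 <= del t - c * del t ^+ 2.
  move=> t ht.
  have [e0 e1 e2 e3] := Heta t ht.
  have hge : emin <= eta t.
    apply: e3 => //; apply: armijo_small => //; exact: ltW.
  move: e2; rewrite /armijo -Hth //.
  set N := norm2 (g (theta t)) ^+ 2 => e2.
  have hN : C (theta t) ^+ 2 * del t ^+ 2 <= N.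
    have h1 : 0 <= C (theta t) * del t by rewrite mulr_ge0 ?hdel ?ltW.
    have h2 : C (theta t) * del t <= norm2 (g (theta t)).
      by have := HL (theta t); rewrite (ger0_norm (hdel t)).
    rewrite -exprMn /N; nra.
  have hmuN : mu * del t ^+ 2 <= N.
    apply: le_trans hN; apply: ler_wpM2r; [exact: sqr_ge0 | exact: Hmu].
  have : c * del t ^+ 2 <= h * eta t * N.
    have -> : c = h * emin * mu by rewrite /c; rewrite /emin; field; lra.
    have h0 : 0 <= mu * del t ^+ 2 by rewrite mulr_ge0 ?sqr_ge0 ?ltW.
    have : h * emin * (mu * del t ^+ 2) <= h * eta t * N.
      apply: ler_pM; [nra | exact: h0 | nra | exact: hmuN].
    by rewrite mulrA.
  rewrite /del; lra.
have Hind : forall n, del n.+1 * c * n%:R <= 1.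
  elim=> [|n IH]; first by rewrite mulr0 ler01.
  have := @step_ineq R (c * del n.+1) (c * del n.+2) n%:R.
  have E : del n.+2 * c * n.+1%:R = c * del n.+2 * (n%:R + 1) by rewrite -natr1; ring.
  move=> H; rewrite E; apply: H.
  - by rewrite mulr_ge0 ?hdel ?ltW.
  - by rewrite mulr_ge0 ?hdel ?ltW.
  - have := Hstep n.+1 isT; nra.
  - by rewrite mulrAC mulrC mulrA.
  - exact: ler0n.
move=> T hT; have := Hind T.
have hT0 : 0 < T%:R :> R by rewrite ltr0n.
move=> H.
have -> : M * (1 / (mu * T%:R)) = 1 / (c * T%:R) by rewrite -Hc; field; lra.
rewrite ler_pdivlMr ?mulr_gt0 //.
by rewrite -/(del T.+1) mulrA.
by rewrite invr_gt0.
Qed.
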